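(* Fix time series $s^1,\ldots,s^k$, $s^l\in\mathbb{Q}^{m_l}$, and let $N=\sum_{l=1}^k m_l-2(k-1)$. For each $l$ let $D_l$ be the directed graph with vertex set $V_l=[m_l]\times[N]$ and arc set $A_l$ consisting of all arcs $((i,j),(i+1,j+1))$, $((i,j),(i+1,j))$, $((i,j),(i,j+1))$ whose endpoints lie in $V_l$; let $s_l=(1,1)$ and $T_l=\{(m_l,j): j\in[N]\}$. Let $L_j\le U_j$ ($j\in[N]$) be the mean-value bounds and $M^l_v=\max(|s^l_i-L_j|,|U_j-s^l_i|)$ for $v=(i,j)\in V_l$. Let $\mathcal{V}$ (the NLP relaxation of the vertex-based formulation) be the set of real vectors $(x,y,z,d)$, $x=(x_j)_{j\in[N]}$, $y=(y^l_v)$, $d=(d^l_v)$ for $l\in[k]$, $v\in V_l$, $z=(z_j)_{j\in[N]}$, satisfying: $\sum_{j=1}^N x_j=1$, $0\le x_j\le 1$; $0\le y^l_v\le 1$; $y^l_{s_l}=1$; $y^l_u\le\sum_{(u,v)\in A_l}y^l_v$ for $u\in V_l\setminus T_l$; $y^l_u\le \sum_{(u,v)\in A_l}y^l_v+x_j$ for $u=(m_l,j)\in T_l$; $d^l_v\ge (z_j-s^l_i)^2-(M^l_v)^2(1-y^l_v)$ and $0\le d^l_v\le (M^l_v)^2$ for $v=(i,j)\in V_l$; $z_j\in[L_j,U_j]$. Let $\mathcal{A}$ (the NLP relaxation of the arc-based formulation) be the set of real vectors $(x,f,y,z,d)$ with $f=(f^l_a)_{l\in[k],a\in A_l}$ satisfying: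 $\sum_{j}x_j=1$, $0\le x_j\le1$; $0\le f^l_a\le 1$; for every $l$ and $v\in V_l$, $f^l(\delta^+(v))-f^l(\delta^-(v))$ equals $1$ if $v=s_l$, equals $-x_j$ if $v=(m_l,j)\in T_l$, and equals $0$ otherwise (where $f^l(\delta^{\pm}(v))$ is the sum of $f^l$ over arcs leaving/entering $v$); $y^l_v=f^l(\delta^+(v))+x_j$ if $v=(m_l,j)\in T_l$ and $y^l_v=f^l(\delta^+(v))$ otherwise; and the same constraints on $d$ and $z$ as in $\mathcal{V}$ (namely $d^l_v\ge (z_j-s^l_i)^2-(M^l_v)^2(1-y^l_v)$, $0\le d^l_v\le (M^l_v)^2$, $z_j\in[L_j,U_j]$). Then the projection of $\mathcal{A}$ onto the variables $(x,y,z,d)$ is contained in $\mathcal{V}$.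
   Context: $[m]=\{1,\ldots,m\}$. The bounds $L_j,U_j$ are, in the setting without global warping constraints, $U_j=\max\frac{\sum_{l}\sum_{i\in I_l}s^l_i}{\sum_l|I_l|}$ and $L_j=\min\frac{\sum_{l}\sum_{i\in I_l}s^l_i}{\sum_l|I_l|}$ over all choices of nonempty integer intervals $I_l=\{a_l,\ldots,b_l\}\subseteq[m_l]$, $l\in[k]$ (so they do not depend on $j$). The NLP relaxation of a mixed-integer program is obtained by replacing the binary requirements on the variables $x$, $y$, $f$ by the interval constraints $[0,1]$. *)

(* Defs.v *)
From HB Require Import structures.
From mathcomp Require Import all_boot all_order all_algebra.
Set Implicit Arguments. Unset Strict Implicit. Unset Printing Implicit Defensive.
Import Order.TTheory GRing.Theory Num.Theory.
Local Open Scope ring_scope.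

(* Indices are 0-based: series l in 'I_k, position i in 'I_(m l), time j in 'I_N. *)
Section DTW.
Variable R : realFieldType.
Variable k : nat.
Variable m : 'I_k -> nat.
Variable s : forall l : 'I_k, 'I_(m l) -> rat.

Definition Nlen : nat := ((\sum_(l < k) m l) - 2 * k.-1)%N.

(* choices of one interval {a_l,...,b_l} in [m_l] for every l *)
Definition Bm : nat := (\max_(l < k) m l)%N.
Definition choice_t := {ffun 'I_k -> 'I_Bm * 'I_Bm}.
Definition valid_choice (c : choice_t) : bool :=
  [forall l, (((c l).1 : nat) <= (c l).2)%N && (((c l).2 : nat) < m l)%N].
Definition interval_mean (c : choice_t) : R :=
  (\sum_(l < k) \sum_(i < m l | (((c l).1 : nat) <= i <= (c l).2)%N) ratr (s i))
  / ((\sum_(l < k) (((c l).2 : nat) - (c l).1).+1)%N)%:R.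
Definition mean_default : R :=
  if [pick c | valid_choice c] is Some c then interval_mean c else 0.
(* U_j and L_j (independent of j) *)
Definition Ubound : R := \big[Num.max/mean_default]_(c | valid_choice c) interval_mean c.
Definition Lbound : R := \big[Num.min/mean_default]_(c | valid_choice c) interval_mean c.

Definition vert (l : 'I_k) := ('I_(m l) * 'I_Nlen)%type.
Definition arcb (l : 'I_k) (u v : vert l) : bool :=
  [|| ((v.1 : nat) == u.1.+1) && ((v.2 : nat) == u.2.+1),
      ((v.1 : nat) == u.1.+1) && ((v.2 : nat) == u.2)
    | ((v.1 : nat) == u.1) && ((v.2 : nat) == u.2.+1)].
Definition arcs (l : 'I_k) := {a : vert l * vert l | arcb a.1 a.2}.
Definition is_src (l : 'I_k) (v : vert l) : bool := ((v.1 : nat) == 0%N) && ((v.2 : nat) == 0%N).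
Definition is_term (l : 'I_k) (v : vert l) : bool := ((v.1 : nat).+1 == m l).

Definition Mval (l : 'I_k) (v : vert l) : R :=
  Num.max `|ratr (s v.1) - Lbound| `|Ubound - ratr (s v.1)|.

Definition x_cons (x : 'I_Nlen -> R) : Prop :=
  \sum_(j < Nlen) x j = 1 /\ (forall j, 0 <= x j <= 1).
Definition dz_cons (y d : forall l, vert l -> R) (z : 'I_Nlen -> R) : Prop :=
  (forall l (v : vert l),
      (z v.2 - ratr (s v.1)) ^+ 2 - (Mval v) ^+ 2 * (1 - y l v) <= d l v
      /\ 0 <= d l v <= (Mval v) ^+ 2)
  /\ (forall j, Lbound <= z j <= Ubound).

Definition inV (x : 'I_Nlen -> R) (y : forall l, vert l -> R) (z : 'I_Nlen -> R)
    (d : forall l, vert l -> R) : Prop :=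
  x_cons x
  /\ (forall l v, 0 <= y l v <= 1)
  /\ (forall l (v : vert l), is_src v -> y l v = 1)
  /\ (forall l (u : vert l), ~~ is_term u -> y l u <= \sum_(v | arcb u v) y l v)
  /\ (forall l (u : vert l), is_term u -> y l u <= \sum_(v | arcb u v) y l v + x u.2)
  /\ dz_cons y d z.

Definition outflow (f : forall l, arcs l -> R) l (v : vert l) : R :=
  \sum_(a : arcs l | (sval a).1 == v) f l a.
Definition inflow (f : forall l, arcs l -> R) l (v : vert l) : R :=
  \sum_(a : arcs l | (sval a).2 == v) f l a.

Definition inA (x : 'I_Nlen -> R) (f : forall l, arcs l -> R) (y : forall l, vert l -> R)
    (z : 'I_Nlen -> R) (d : forall l, vert l -> R) : Prop :=
  x_cons x
  /\ (forall l a, 0 <= f l a <= 1)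
  /\ (forall l (v : vert l), outflow f v - inflow f v =
        (if is_src v then 1 else if is_term v then - x v.2 else 0))
  /\ (forall l (v : vert l), y l v = outflow f v + (if is_term v then x v.2 else 0))
  /\ dz_cons y d z.

End DTW.

(* Main.v *)
Require Import Defs.
From HB Require Import structures.
From mathcomp Require Import all_boot all_order all_algebra.
From mathcomp Require Import zify lra.
Set Implicit Arguments. Unset Strict Implicit. Unset Printing Implicit Defensive.
Import Order.TTheory GRing.Theory Num.Theory.
Local Open Scope ring_scope.

Lemma arcb_rank k (m : 'I_k -> nat) (l : 'I_k) (u w : vert m l) :
  arcb u w -> (u.1 + u.2 < w.1 + w.2)%N.
Proof.
rewrite /arcb; case/or3P => /andP [/eqP -> /eqP ->]; lia.
Qed.

Lemma sum_ind_le1 (R : realFieldType) n :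
  \sum_(i < n) (if (i.+1 == n)%N then 1 else 0 : R) <= 1.
Proof.
case: n => [|n]; first by rewrite big_ord0.
rewrite big_ord_recr /= eqxx big1 ?add0r // => i _.
by rewrite eqSS ltn_eqF.
Qed.

Lemma core (R : realFieldType) k (m : 'I_k -> nat) (x : 'I_(Nlen m) -> R)
  (f : forall l, arcs m l -> R) (l : 'I_k) :
  (forall j, 0 <= x j) -> \sum_j x j = 1 -> (forall a, 0 <= f l a) ->
  (forall v : vert m l, outflow f v - inflow f v =
     (if is_src v then 1 else if is_term v then - x v.2 else 0)) ->
  forall v : vert m l, outflow f v + (if is_term v then x v.2 else 0) <= 1.
Proof.
move=> x0 x1 f0 cons v.
pose t (u : vert m l) : R := if is_term u then x u.2 else 0.
pose e (u : vert m l) : R := outflow f u - inflow f u + t u.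
have e0 u : 0 <= e u.
  rewrite /e cons /t; case: (is_src u); case: (is_term u) => //=.
  - by rewrite addr_ge0.
  - by rewrite addr0.
  - by rewrite addNr.
  - by rewrite addr0.
have t0 u : 0 <= t u by rewrite /t; case: ifP.
pose C (u : vert m l) := (v.1 + v.2 <= u.1 + u.2)%N.
have Hout : \sum_(u | C u) outflow f u = \sum_(a | C (sval a).1) f l a.
  rewrite (partition_big (fun a : arcs m l => (sval a).1) C) //=.
  apply: eq_bigr => u Cu; apply: eq_bigl => a.
  by case: eqP => [->|]; rewrite ?Cu ?andbF.
have Hin : \sum_(u | C u) inflow f u = \sum_(a | C (sval a).2) f l a.
  rewrite (partition_big (fun a : arcs m l => (sval a).2) C) //=.
  apply: eq_bigr => u Cu; apply: eq_bigl => a.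
  by case: eqP => [->|]; rewrite ?Cu ?andbF.
have P12 (a : arcs m l) : C (sval a).1 -> C (sval a).2.
  have := arcb_rank (svalP a); rewrite /C; lia.
have Hcut : \sum_(u | C u) (outflow f u - inflow f u) <= - inflow f v.
  rewrite sumrB Hout Hin (bigID (fun a : arcs m l => C (sval a).1) (fun a => C (sval a).2)) /=.
  have -> : \sum_(a | C (sval a).2 && C (sval a).1) f l a = \sum_(a | C (sval a).1) f l a.
    apply: eq_bigl => a; case H1: (C (sval a).1); last by rewrite andbF.
    by rewrite (P12 a H1).
  rewrite opprD addrA subrr add0r lerN2 /inflow.
  rewrite [X in X <= _]big_mkcond [X in _ <= X]big_mkcond /=.
  apply: ler_sum => a _.
  case: (boolP ((sval a).2 == v)) => [/eqP E|_]; last by case: ifP => // _; case: ifP.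
  have H := arcb_rank (svalP a); rewrite E in H.
  by rewrite ifT // /C E leqnn /= -ltnNge.
have HsumC : \sum_(u | C u) (outflow f u - inflow f u)
     = \sum_(u | C u) e u - \sum_(u | C u) t u.
  by rewrite -sumrB; apply: eq_bigr => u _; rewrite /e addrK.
have Cv : C v by rewrite /C.
have eC : e v <= \sum_(u | C u) e u.
  rewrite (bigD1 v Cv) /= lerDl; exact: sumr_ge0.
have tC : \sum_(u | C u) t u <= \sum_u t u.
  rewrite [X in _ <= X](bigID C) /= lerDl; exact: sumr_ge0.
have tall : \sum_u t u <= 1.
  rewrite -(pair_big xpredT xpredT (fun i j => t (i, j))) /=.
  apply: le_trans (sum_ind_le1 R (m l)).
  apply: ler_sum => i _; rewrite /t /is_term /=.
  case: ifP => _; first by rewrite x1.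
  by rewrite big1.
have -> : outflow f v + (if is_term v then x v.2 else 0) = inflow f v + e v.
  by rewrite /e /t addrA addrCA subrr addr0.
rewrite HsumC in Hcut.
apply: le_trans tall; apply: le_trans tC.
lra.
Qed.

Theorem mainTheorem2 (R : realFieldType) (k : nat) (m : 'I_k -> nat)
  (s : forall l : 'I_k, 'I_(m l) -> rat)
  (x : 'I_(Nlen m) -> R) (y : forall l : 'I_k, vert m l -> R)
  (z : 'I_(Nlen m) -> R) (d : forall l : 'I_k, vert m l -> R) :
  (exists f : forall l : 'I_k, arcs m l -> R, inA s x f y z d) ->
  inV s x y z d.
Proof.
case=> f [[xs xb] [fb [cons [yd dz]]]].
have x0 j : 0 <= x j by case/andP: (xb j).
have f0 l a : 0 <= f l a by case/andP: (fb l a).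
have out0 l (v : vert m l) : 0 <= outflow f v by apply: sumr_ge0 => a _.
have in0 l (v : vert m l) : 0 <= inflow f v by apply: sumr_ge0 => a _.
have t0 l (v : vert m l) : 0 <= (if is_term v then x v.2 else 0) by case: ifP.
have y1 l v : y l v <= 1 by rewrite yd; apply: core.
have yin l (v : vert m l) : inflow f v <= y l v.
  rewrite yd -(subrK (inflow f v) (outflow f v)) cons.
  have := x0 v.2; case: ifP => _; case: ifP => _; lra.
split; first by [].
split; first by move=> l v; rewrite y1 andbT yd addr_ge0.
split.
  move=> l v sv; apply/eqP; rewrite eq_le y1 /=.
  rewrite yd -(subrK (inflow f v) (outflow f v)) cons sv.
  have := in0 l v; have := x0 v.2; case: ifP => _; lra.
have key l (u : vert m l) : outflow f u <= \sum_(v | arcb u v) y l v.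
  rewrite /outflow (partition_big (fun a : arcs m l => (sval a).2) (arcb u)); last first.
    by move=> a /eqP <-; exact: (svalP a).
  apply: ler_sum => v _; apply: le_trans (yin l v).
  rewrite /inflow [X in X <= _]big_mkcond [X in _ <= X]big_mkcond /=.
  apply: ler_sum => a _; case: eqP => _; rewrite ?andbT ?andbF //.
  by case: ifP.
split.
  move=> l u /negbTE nt; rewrite yd nt addr0; exact: key.
split; last by [].
move=> l u tu; rewrite yd tu lerD2r; exact: key.
Qed.
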